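(* Let $E/\mathbb{Q}$ be an elliptic curve with nonzero $j$-invariant and a rational point $P$ of order $3$. If $\widetilde E=E/\langle P\rangle$ has a rational point of order $3$, then there are relatively prime integers $a,b$, both perfect cubes, with $a>0$, such that $E$ and $\widetilde E$ are $\mathbb{Q}$-isomorphic to $E_{C_3}(a,b)$ and $\widetilde E_{C_3}(a,b)$, respectively.
   Context: For integers $a,b$, $E_{C_3}(a,b)$ is the curve $y^2+axy+a^2by=x^3$ over $\mathbb{Q}$ (with the point $(0,0)$ of order $3$), and $\widetilde E_{C_3}(a,b)$ is the curve $y^2+axy+a^2by=x^3-5a^3b\,x-a^4b(a+7b)$, which is a model of $E_{C_3}(a,b)/\langle(0,0)\rangle$. Known fact usable here: every elliptic curve $E/\mathbb{Q}$ with nonzero $j$-invariant and a rational point $P$ of order $3$ is $\mathbb{Q}$-isomorphic to $E_{C_3}(a,b)$ for some relatively prime integers $a>0$, $b$, with $E/\langle P\rangle\cong \widetilde E_{C_3}(a,b)$. *)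

(* Defs.v *)
From mathcomp Require Import all_boot all_order all_algebra.
Set Implicit Arguments. Unset Strict Implicit. Unset Printing Implicit Defensive.
Import Order.TTheory GRing.Theory Num.Theory.
Local Open Scope ring_scope.

(* A Weierstrass model y^2 + a1 xy + a3 y = x^3 + a2 x^2 + a4 x + a6 over Q. *)
Record wcurve := WCurve { a1 : rat; a2 : rat; a3 : rat; a4 : rat; a6 : rat }.

Definition b2 (E : wcurve) : rat := a1 E ^+ 2 + 4%:R * a2 E.
Definition b4 (E : wcurve) : rat := 2%:R * a4 E + a1 E * a3 E.
Definition b6 (E : wcurve) : rat := a3 E ^+ 2 + 4%:R * a6 E.
Definition b8 (E : wcurve) : rat :=
  a1 E ^+ 2 * a6 E + 4%:R * a2 E * a6 E - a1 E * a3 E * a4 E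
  + a2 E * a3 E ^+ 2 - a4 E ^+ 2.
Definition c4 (E : wcurve) : rat := b2 E ^+ 2 - 24%:R * b4 E.
Definition disc (E : wcurve) : rat :=
  - b2 E ^+ 2 * b8 E - 8%:R * b4 E ^+ 3 - 27%:R * b6 E ^+ 2
  + 9%:R * b2 E * b4 E * b6 E.
Definition is_elliptic (E : wcurve) : Prop := disc E != 0.
Definition jinv (E : wcurve) : rat := c4 E ^+ 3 / disc E.

(* Rational points: None is the point at infinity O. *)
Definition point := option (rat * rat).
Definition on_curve (E : wcurve) (P : point) : Prop :=
  match P with
  | None => True
  | Some (x, y) =>
      y ^+ 2 + a1 E * x * y + a3 E * y =
      x ^+ 3 + a2 E * x ^+ 2 + a4 E * x + a6 E
  end.

(* Chord-and-tangent group law (Silverman III.2.3). *)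
Definition padd (E : wcurve) (P Q : point) : point :=
  match P, Q with
  | None, _ => Q
  | _, None => P
  | Some (x1, y1), Some (x2, y2) =>
    if (x1 == x2) && (y1 + y2 + a1 E * x2 + a3 E == 0) then None
    else
      let lam := if x1 != x2 then (y2 - y1) / (x2 - x1)
                 else (3%:R * x1 ^+ 2 + 2%:R * a2 E * x1 + a4 E - a1 E * y1)
                      / (2%:R * y1 + a1 E * x1 + a3 E) in
      let nu := if x1 != x2 then (y1 * x2 - y2 * x1) / (x2 - x1)
                else (- x1 ^+ 3 + a4 E * x1 + 2%:R * a6 E - a3 E * y1)
                     / (2%:R * y1 + a1 E * x1 + a3 E) in
      let x3 := lam ^+ 2 + a1 E * lam - a2 E - x1 - x2 in
      Some (x3, - (lam + a1 E) * x3 - nu - a3 E)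
  end.

Definition order3 (E : wcurve) (P : point) : Prop :=
  P <> None /\ padd E P (padd E P P) = None.

(* Q-isomorphism of Weierstrass models: an admissible change of variables
   x = u^2 x' + r, y = u^3 y' + s u^2 x' + t  (Silverman III.3.1, Table 3.1). *)
Definition Qiso (E E' : wcurve) : Prop :=
  exists u r s t : rat, u != 0 /\
    u * a1 E' = a1 E + 2%:R * s /\
    u ^+ 2 * a2 E' = a2 E - s * a1 E + 3%:R * r - s ^+ 2 /\
    u ^+ 3 * a3 E' = a3 E + r * a1 E + 2%:R * t /\
    u ^+ 4 * a4 E' = a4 E - s * a3 E + 2%:R * r * a2 E - (t + r * s) * a1 E
                     + 3%:R * r ^+ 2 - 2%:R * s * t /\
    u ^+ 6 * a6 E' = a6 E + r * a4 E + r ^+ 2 * a2 E + r ^+ 3 - t * a3 E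
                     - t ^+ 2 - r * t * a1 E.

(* Velu's model of the quotient E/<P> for a point P of order 3
   (kernel {O, P, -P}; one representative P of the pair {P, -P}). *)
Definition quot3 (E : wcurve) (P : point) : wcurve :=
  match P with
  | None => E
  | Some (x0, y0) =>
    let gx := 3%:R * x0 ^+ 2 + 2%:R * a2 E * x0 + a4 E - a1 E * y0 in
    let gy := - 2%:R * y0 - a1 E * x0 - a3 E in
    let v := 2%:R * gx - a1 E * gy in
    let w := gy ^+ 2 + x0 * v in
    WCurve (a1 E) (a2 E) (a3 E) (a4 E - 5%:R * v)
           (a6 E - b2 E * v - 7%:R * w)
  end.

Definition EC3 (a b : int) : wcurve :=
  WCurve (a%:~R) 0 ((a ^+ 2 * b)%:~R) 0 0.
Definition EtC3 (a b : int) : wcurve :=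
  WCurve (a%:~R) 0 ((a ^+ 2 * b)%:~R) ((- 5%:Z * a ^+ 3 * b)%:~R)
         ((- (a ^+ 4 * b * (a + 7%:Z * b)))%:~R).

Definition is_cube (n : int) : Prop := exists c : int, n = c ^+ 3.

(* Main.v *)
Require Import Defs.
From mathcomp Require Import all_boot all_order all_algebra.
From mathcomp Require Import ring lra.
Import Order.TTheory GRing.Theory Num.Theory.
Local Open Scope ring_scope.

Lemma ord3_facts E x y : order3 E (Some (x, y)) ->
  2%:R * y + a1 E * x + a3 E != 0 /\
  (3%:R * x ^+ 2 + 2%:R * a2 E * x + a4 E - a1 E * y) ^+ 2
  + a1 E * (3%:R * x ^+ 2 + 2%:R * a2 E * x + a4 E - a1 E * y) * (2%:R * y + a1 E * x + a3 E)
  - (a2 E + 3%:R * x) * (2%:R * y + a1 E * x + a3 E) ^+ 2 = 0.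
Proof.
rewrite /order3 /padd; case=> _. rewrite eqxx /=.
have -> : y + y = 2%:R * y by ring.
set N := (3%:R * x ^+ 2 + 2%:R * a2 E * x + a4 E - a1 E * y).
set D := (2%:R * y + a1 E * x + a3 E).
case: eqP => [_ | /eqP hD] //=.
set x3 := _ - x - x.
case: eqP => [hx | hx] //=.
move=> _; split => //.
have h2 : (N / D) ^+ 2 + a1 E * (N / D) - a2 E - 3%:R * x = 0.
  have -> : (N / D) ^+ 2 + a1 E * (N / D) - a2 E - 3%:R * x = x3 - x by rewrite /x3; ring.
  by rewrite -hx subrr.
have : ((N / D) ^+ 2 + a1 E * (N / D) - a2 E - 3%:R * x) * D ^+ 2 = 0 by rewrite h2 mul0r.
move=> <-. by field.
Qed.
Definition psi3 (E : wcurve) (x : rat) : rat :=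
  3%:R * x ^+ 4 + b2 E * x ^+ 3 + 3%:R * b4 E * x ^+ 2 + 3%:R * b6 E * x + b8 E.
Definition fdiv (E : wcurve) (x : rat) : rat :=
  4%:R * x ^+ 3 + b2 E * x ^+ 2 + 2%:R * b4 E * x + b6 E.
Definition Wt (A C : rat) : wcurve := WCurve A 0 C (- 5%:R * A * C) (- C * (A ^+ 3 + 7%:R * C)).

Lemma core A C X D : A != 0 -> D != 0 -> D ^+ 2 = fdiv (Wt A C) X -> psi3 (Wt A C) X = 0 ->
  exists sg : rat, sg ^+ 3 = C / A ^+ 3.
Proof.
move=> hA hD hf hp.
have [h0 | h0] := eqVneq (3%:R * X + A ^+ 2) 0.
  have hX : X = - A ^+ 2 / 3%:R.
    apply/eqP; rewrite -subr_eq0; apply/eqP.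
    have -> : X - - A ^+ 2 / 3%:R = (3%:R * X + A ^+ 2) / 3%:R by field.
    by rewrite h0 mul0r.
  have h27 : 27%:R * D ^+ 2 + (A ^+ 3 - 27%:R * C) ^+ 2 = 0.
    by rewrite hf /fdiv /b2 /b4 /b6 /= hX; field.
  have h1 : 0 < D ^+ 2 by rewrite exprn_even_gt0 //.
  have h2 : 0 <= (A ^+ 3 - 27%:R * C) ^+ 2 by rewrite sqr_ge0.
  exfalso; move: h1 h2 h27; generalize (D ^+ 2) ((A ^+ 3 - 27%:R * C) ^+ 2) => p q; lra.
exists ((9%:R * C + A * X) / (A * (3%:R * X + A ^+ 2))).
have key : (9%:R * C + A * X) ^+ 3 = C * (3%:R * X + A ^+ 2) ^+ 3.
  apply/eqP; rewrite -subr_eq0; apply/eqP.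
  apply: (mulfI h0).
  have -> : (3%:R * X + A ^+ 2) * ((9%:R * C + A * X) ^+ 3 - C * (3%:R * X + A ^+ 2) ^+ 3)
     = (A ^+ 3 - 27%:R * C) * psi3 (Wt A C) X by rewrite /psi3 /b2 /b4 /b6 /b8 /=; ring.
  by rewrite hp !mulr0.
rewrite expr_div_n exprMn key. field.
by rewrite h0 hA.
Qed.

Lemma ord3_psi E x y : on_curve E (Some (x, y)) -> order3 E (Some (x, y)) ->
  2%:R * y + a1 E * x + a3 E != 0 /\
  (2%:R * y + a1 E * x + a3 E) ^+ 2 = fdiv E x /\ psi3 E x = 0.
Proof.
move=> /= hc h3; have [hD hN] := ord3_facts _ _ _ h3.
have hf : (2%:R * y + a1 E * x + a3 E) ^+ 2 = fdiv E x.
  apply/eqP; rewrite -subr_eq0; apply/eqP.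
  have -> : (2%:R * y + a1 E * x + a3 E) ^+ 2 - fdiv E x =
    4%:R * ((y ^+ 2 + a1 E * x * y + a3 E * y) - (x ^+ 3 + a2 E * x ^+ 2 + a4 E * x + a6 E))
    by rewrite /fdiv /b2 /b4 /b6; ring.
  by rewrite hc subrr mulr0.
split => //; split => //.
have -> : psi3 E x = - ((3%:R * x ^+ 2 + 2%:R * a2 E * x + a4 E - a1 E * y) ^+ 2
  + a1 E * (3%:R * x ^+ 2 + 2%:R * a2 E * x + a4 E - a1 E * y) * (2%:R * y + a1 E * x + a3 E)
  - (a2 E + 3%:R * x) * (2%:R * y + a1 E * x + a3 E) ^+ 2)
  + (4%:R^-1 * (b2 E + 12%:R * x)) * (fdiv E x - (2%:R * y + a1 E * x + a3 E) ^+ 2).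
  by rewrite /psi3 /fdiv /b2 /b4 /b6 /b8; field.
by rewrite hN hf subrr mulr0 oppr0 addr0.
Qed.

Theorem proposition4p4 (E : wcurve) (P : point) :
  is_elliptic E -> jinv E != 0 ->
  on_curve E P -> order3 E P ->
  (exists Q : point, on_curve (quot3 E P) Q /\ order3 (quot3 E P) Q) ->
  exists a b : int,
    coprimez a b /\ 0 < a /\ is_cube a /\ is_cube b /\
    Qiso E (EC3 a b) /\ Qiso (quot3 E P) (EtC3 a b).
Proof.
move=> _ hj hPc hP3 [Q [hQc hQ3]].
case: P hPc hP3 hQc hQ3 => [[x0 y0]|]; last by move=> _ [].
case: Q => [[xq yq]|]; last by move=> _ _ _ [].
case: E hj => e1 e2 e3 e4 e6 hj hPc hP3 hQc hQ3.
have [hD0 hN0] := ord3_facts _ _ _ hP3.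
move: hD0 hN0 => /= hD0 hN0.
move: hPc => /= hPc.
have he6 : e6 = y0 ^+ 2 + e1 * x0 * y0 + e3 * y0 - x0 ^+ 3 - e2 * x0 ^+ 2 - e4 * x0.
  by rewrite hPc; ring.
subst e6.
pose s := (3%:R * x0 ^+ 2 + 2%:R * e2 * x0 + e4 - e1 * y0) / (2%:R * y0 + e1 * x0 + e3).
have hs : s * (2%:R * y0 + e1 * x0 + e3) = 3%:R * x0 ^+ 2 + 2%:R * e2 * x0 + e4 - e1 * y0.
  by rewrite /s; field.
clearbody s.
rewrite -hs in hN0.
have he2 : e2 = s * e1 + s ^+ 2 - 3%:R * x0.
  apply/eqP; rewrite -subr_eq0; apply/eqP.
  apply: (mulIf (expf_neq0 2 hD0)). rewrite mul0r -oppr0 -hN0. ring.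
subst e2.
have he4 : e4 = s * (2%:R * y0 + e1 * x0 + e3) - 3%:R * x0 ^+ 2 - 2%:R * (s * e1 + s ^+ 2 - 3%:R * x0) * x0 + e1 * y0.
  by rewrite hs; ring.
subst e4.
have hA1 : e1 + 2%:R * s != 0.
  apply/eqP => h0; move: hj; rewrite /jinv.
  have -> : c4 (WCurve e1 (s * e1 + s ^+ 2 - 3%:R * x0) e3
    (s * (2%:R * y0 + e1 * x0 + e3) - 3%:R * x0 ^+ 2 - 2%:R * (s * e1 + s ^+ 2 - 3%:R * x0) * x0 + e1 * y0)
    (y0 ^+ 2 + e1 * x0 * y0 + e3 * y0 - x0 ^+ 3 - (s * e1 + s ^+ 2 - 3%:R * x0) * x0 ^+ 2 -
     (s * (2%:R * y0 + e1 * x0 + e3) - 3%:R * x0 ^+ 2 - 2%:R * (s * e1 + s ^+ 2 - 3%:R * x0) * x0 + e1 * y0) * x0))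
    = (e1 + 2%:R * s) * ((e1 + 2%:R * s) ^+ 3 - 24%:R * (2%:R * y0 + e1 * x0 + e3)).
    by rewrite /c4 /b2 /b4 /=; ring.
  by rewrite h0 mul0r expr0n /= mul0r eqxx.
have [hDQ [hfQ hpQ]] := ord3_psi _ _ _ hQc hQ3.
have [sg hsg] : exists sg : rat, sg ^+ 3 = (2%:R * y0 + e1 * x0 + e3) / (e1 + 2%:R * s) ^+ 3.
  apply: (@core (e1 + 2%:R * s) (2%:R * y0 + e1 * x0 + e3) (xq - x0) _ hA1 hDQ).
    rewrite hfQ /fdiv /b2 /b4 /b6 /= /b2 /=; ring.
  rewrite -hpQ /psi3 /b2 /b4 /b6 /b8 /= /b2 /=; ring.
have he3 : e3 = (e1 + 2%:R * s) ^+ 3 * sg ^+ 3 - 2%:R * y0 - e1 * x0.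
  by rewrite hsg; field.
clear hsg hj hP3 hQ3 hQc hPc hN0 hs hDQ hfQ hpQ.
subst e3.
have hq := divq_num_den sg.
have hn : (denq sg)%:~R != 0 :> rat by rewrite intr_eq0 denq_neq0.
exists (denq sg ^+ 3), (numq sg ^+ 3).
split.
  apply: coprimezXl; apply: coprimezXr; rewrite coprimezE coprime_sym; exact: coprime_num_den.
split; first by rewrite exprn_gt0 // denq_gt0.
split; first by exists (denq sg).
split; first by exists (numq sg).
move: hq hn; set m := numq sg; set n := denq sg => hq hn.
rewrite -hq.
have hu : (e1 + 2%:R * s) / n%:~R ^+ 3 != 0 by rewrite mulf_neq0 // invr_eq0 expf_neq0.
split.
  exists ((e1 + 2%:R * s) / n%:~R ^+ 3), x0, s, y0; rewrite /EC3 /=.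
  rewrite !(rmorphXn, rmorphM, rmorphN, rmorphD) /=.
  split=> //; split; first by field.
  split; first by ring.
  split; first by field.
  split; first by ring.
  by ring.
exists ((e1 + 2%:R * s) / n%:~R ^+ 3), x0, s, y0; rewrite /EtC3 /=.
rewrite !(rmorphXn, rmorphM, rmorphN, rmorphD) /=.
split=> //; split; first by field.
split; first by ring.
split; first by field.
split. rewrite /b2 /=. field. done.
rewrite /b2 /=. field. done.
Qed.
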